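(* Let $G$ be a split VPT graph with split partition $(S,K)$ such that $|N(v)\cap S|\leq 2$ for every $v\in K$, and let $n\geq 4$. If the branch graph $B(G/K)$ contains an induced cycle $C_n$, then $G$ contains an induced $n$-sun $S_n$.
   Context: All graphs are finite, simple and connected. A graph is split if its vertex set partitions into a stable set $S$ and a clique (maximal complete set) $K$. VPT graphs are vertex-intersection graphs of paths in a tree. For $n\geq 4$, the $n$-sun $S_n$ is the split graph with stable set $\{s_1,\dots,s_n\}$, central clique $\{v_1,\dots,v_n\}$, $N(s_i)=\{v_i,v_{i+1}\}$ for $1\le i\le n-1$ and $N(s_n)=\{v_n,v_1\}$. For a clique $C$ of $G$, the branch graph $B(G/C)$ has vertex set the vertices of $V(G)\setminus C$ adjacent to some vertex of $C$, two such vertices $v,w$ being adjacent iff (1) $vw\notin E(G)$; (2) some vertex of $C$ is adjacent to both; (3) there exist $v',w'\in C$ with $v'$ adjacent to $v$ but not $w$, and $w'$ adjacent to $w$ but not $v$. *)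

(* Defs.v *)
From mathcomp Require Import all_boot.
Set Implicit Arguments. Unset Strict Implicit. Unset Printing Implicit Defensive.

Definition simple_graph (V : finType) (E : rel V) : Prop :=
  symmetric E /\ irreflexive E.

Definition connected_graph (V : finType) (E : rel V) : Prop :=
  forall x y : V, connect E x y.

Definition is_tree (T : finType) (e : rel T) : Prop :=
  [/\ simple_graph e, connected_graph e &
      forall s : seq T, 3 <= size s -> uniq s -> ~~ cycle e s].

Definition is_tree_path (T : finType) (e : rel T) (P : {set T}) : Prop :=
  exists (x : T) (p : seq T), [/\ uniq (x :: p), path e x p & P = [set:: x :: p]].

Definition VPT (V : finType) (E : rel V) : Prop :=
  exists (T : finType) (e : rel T) (P : V -> {set T}),
    [/\ is_tree e, forall v, is_tree_path e (P v) &
        forall u v : V, u != v -> (E u v <-> P u :&: P v != set0)].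

Definition complete_set (V : finType) (E : rel V) (A : {set V}) : Prop :=
  forall x y, x \in A -> y \in A -> x != y -> E x y.

Definition stable_set (V : finType) (E : rel V) (A : {set V}) : Prop :=
  forall x y, x \in A -> y \in A -> ~~ E x y.

Definition is_clique (V : finType) (E : rel V) (A : {set V}) : Prop :=
  complete_set E A /\
  (forall B : {set V}, A \subset B -> complete_set E B -> B = A).

Definition split_partition (V : finType) (E : rel V) (S K : {set V}) : Prop :=
  [/\ S :|: K = setT, [disjoint S & K], stable_set E S & is_clique E K].

Definition nbhd (V : finType) (E : rel V) (v : V) : {set V} := [set w | E v w].

Definition branch_vertex (V : finType) (E : rel V) (C : {set V}) (v : V) : bool :=
  (v \notin C) && [exists c in C, E v c].

Definition branch_adj (V : finType) (E : rel V) (C : {set V}) (v w : V) : bool :=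
  [&& branch_vertex E C v, branch_vertex E C w, ~~ E v w,
      [exists c in C, E c v && E c w],
      [exists v' in C, E v' v && ~~ E v' w] &
      [exists w' in C, E w' w && ~~ E w' v]].

Definition cyc_adj (n : nat) (i j : 'I_n) : bool :=
  (i.+1 %% n == j) || (j.+1 %% n == i).

Definition has_induced_cycle (V : finType) (A : pred V) (R : rel V) (n : nat) : Prop :=
  exists f : 'I_n -> V,
    [/\ injective f, forall i, A (f i) &
        forall i j, R (f i) (f j) = cyc_adj i j].

Definition has_induced_sun (V : finType) (E : rel V) (n : nat) : Prop :=
  exists (s v : 'I_n -> V),
    [/\ injective s, injective v, forall i j, s i != v j,
        (forall i j, ~~ E (s i) (s j)) /\ (forall i j, i != j -> E (v i) (v j)) &
        forall i j, E (s i) (v j) = ((val j == val i) || (val j == i.+1 %% n))].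

(* Main.v *)
Require Import Defs.
From mathcomp Require Import all_boot.
From mathcomp Require Import zify.

Lemma card2_third (V : finType) (A : {set V}) x y z :
  #|A| <= 2 -> x \in A -> y \in A -> z \in A -> x != y -> (z == x) || (z == y).
Proof.
move=> HA xA yA zA xy; apply/negPn/negP; rewrite negb_or => /andP[zx zy].
have sub : [set z; x; y] \subset A.
  by apply/subsetP=> w; rewrite !inE => /orP[/orP[]|] /eqP->.
have := subset_leq_card sub; rewrite -setUA cardsU1 cards2 xy !inE.
by rewrite negb_or zx zy /=; move=> H; have := leq_trans H HA.
Qed.

Lemma ordSS_neq n (k : 'I_n) : 3 <= n -> ordS (ordS k) != k.
Proof.
move=> n3; apply/negP=> /eqP/(congr1 val) /=.
have kn := ltn_ord k.
case: (ltngtP k.+1 n) => h.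
- rewrite (modn_small h).
  case: (ltngtP k.+2 n) => h2.
  + rewrite (modn_small h2); lia.
  + lia.
  + rewrite h2 modnn; lia.
- lia.
- rewrite h modnn modn_small; lia.
Qed.

Theorem mainTheorem12 (V : finType) (E : rel V) (S K : {set V}) (n : nat) :
  simple_graph E -> connected_graph E -> VPT E ->
  split_partition E S K ->
  (forall v, v \in K -> #|nbhd E v :&: S| <= 2) ->
  4 <= n ->
  has_induced_cycle (branch_vertex E K) (branch_adj E K) n ->
  has_induced_sun E n.
Proof.
move=> [Esym Eirr] _ _ [SK dSK stS [cK _]] H2 n4 [f [finj fB fR]].
have n3 : 3 <= n by apply: leq_trans n4.
have fS : forall i, f i \in S.
  move=> i; have /andP[fK _] := fB i.
  have : f i \in S :|: K by rewrite SK inE.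
  by rewrite inE (negbTE fK) orbF.
have fnK : forall i, f i \notin K by move=> i; case/andP: (fB i).
pose v (j : 'I_n) := odflt (f j) [pick c in K | E c (f (ord_pred j)) && E c (f j)].
have vP : forall j, [/\ v j \in K, E (v j) (f (ord_pred j)) & E (v j) (f j)].
  move=> j.
  have : branch_adj E K (f (ord_pred j)) (f j).
    by rewrite fR /cyc_adj; apply/orP; left; apply/eqP;
       exact: (congr1 val (ord_predK j)).
  case/and5P=> _ _ _ /existsP[c /andP[cinK /andP[c1 c2]]] _.
  rewrite /v; case: pickP => [d /andP[dK /andP[d1 d2]]|] /=; first by [].
  by move=> /(_ c); rewrite cinK c1 c2.
have predne : forall j : 'I_n, ord_pred j != j.
  move=> j; apply/negP=> /eqP h.
  have : ordS (ord_pred j) = ordS j by rewrite h.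
  rewrite ord_predK => h2.
  by have := @ordSS_neq n j n3; rewrite -!h2 eqxx.
have nbr : forall i j, E (f i) (v j) = (i == ord_pred j) || (i == j).
  move=> i j; have [vK v1 v2] := vP j.
  apply/idP/idP.
  - move=> e.
    have := @card2_third _ _ (f (ord_pred j)) (f j) (f i) (H2 _ vK).
    rewrite /nbhd !inE v1 v2 Esym e !fS /=.
    have neq : f (ord_pred j) != f j by rewrite (inj_eq finj) predne.
    by move=> /(_ isT isT isT neq) /orP[] /eqP/finj ->; rewrite eqxx ?orbT.
  - by case/orP=> /eqP ->; rewrite Esym.
have vinj : injective v.
  move=> j k vjk.
  have [vK v1 v2] := vP j.
  move: (nbr (ord_pred j) k) (nbr j k); rewrite -vjk Esym v1 Esym v2.
  move=> /esym /orP[/eqP/ord_pred_inj -> //|/eqP h1].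
  move=> /esym /orP[/eqP h2|/eqP -> //].
  by have := @ordSS_neq n k n3; rewrite -{1}h1 h2 !ord_predK eqxx.
exists f, v; split => //.
- move=> i j; apply/negP=> /eqP e.
  by have [vK _ _] := vP j; move: (fnK i); rewrite e vK.
- split.
  + by move=> i j; apply: stS.
  + move=> i j ij; have [iK _ _] := vP i; have [jK _ _] := vP j.
    apply: cK => //; apply: contraNneq ij => e.
    by rewrite (vinj _ _ e).
- move=> i j; rewrite nbr (orbC (i == ord_pred j)); congr orb.
  + by rewrite eq_sym.
  + apply/eqP/eqP => [->|h]; first exact: (esym (congr1 val (ord_predK j))).
    by apply: ordS_inj; rewrite ord_predK; apply: val_inj; rewrite /= h.
Qed.
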